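(* Let $(H,\mu_H,\Delta_H,\alpha_H)$ be a Hom-bialgebra and $(A,\mu_A,\alpha_A)$ a left $H$-module Hom-algebra with action $h\otimes a\mapsto h\cdot a$, with $\alpha_H,\alpha_A$ bijective. Assume moreover that $(A,\alpha_A)$ is a left $H$-comodule with structure $a\mapsto a_{(-1)}\otimes a_{(0)}$ such that $(A,\mu_A,\alpha_A)$ is a left $H$-comodule Hom-algebra and $(A,\alpha_A)$ is a left-left Yetter-Drinfeld module over $H$. Then the Hom-smash product $A\# H$ is an $H$-bicomodule Hom-algebra via $\rho_{A\# H}(a\# h)=(\alpha_A(a)\# h_1)\otimes h_2$ and $\lambda_{A\# H}:A\# H\to H\otimes(A\# H)$, $\lambda_{A\# H}(a\# h)=a_{(-1)}h_1\otimes(a_{(0)}\# h_2)$.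
   Context: Over a field $k$, no (co)units assumed; $\Delta(h)=h_1\otimes h_2$. Hom-associative algebra $(A,\mu,\alpha)$: $\alpha(aa')=\alpha(a)\alpha(a')$, $\alpha(a)(a'a'')=(aa')\alpha(a'')$; morphisms commute with structure maps and multiplications; tensor products of Hom-associative algebras are componentwise. Hom-bialgebra $(H,\mu,\Delta,\alpha)$: $(H,\mu,\alpha)$ Hom-associative, $\Delta(h_1)\otimes\alpha(h_2)=\alpha(h_1)\otimes\Delta(h_2)$, $\Delta(hh')=h_1h'_1\otimes h_2h'_2$, $\Delta(\alpha(h))=\alpha(h_1)\otimes\alpha(h_2)$. Left $H$-module Hom-algebra: Hom-associative $(A,\mu_A,\alpha_A)$ with action satisfying $\alpha_A(h\cdot a)=\alpha_H(h)\cdot\alpha_A(a)$, $\alpha_H(h)\cdot(h'\cdot a)=(hh')\cdot\alpha_A(a)$, $\alpha_H^2(h)\cdot(aa')=(h_1\cdot a)(h_2\cdot a')$. Hom-smash product $A\# H$: $A\otimes H$, structure map $\alpha_A\otimes\alpha_H$, product $(a\# h)(a'\# h')=a(\alpha_H^{-2}(h_1)\cdot\alpha_A^{-1}(a'))\#\alpha_H^{-1}(h_2)h'$. A left $H$-comodule structure on $(M,\alpha_M)$ is $\lambda:M\to H\otimes M$ with $(\alpha_H\otimes\alpha_M)\circ\lambda=\lambda\circ\alpha_M$ and $(\Delta_H\otimes\alpha_M)\circ\lambda=(\alpha_H\otimes\lambda)\circ\lambda$; a right one is $\rho:M\to M\otimes H$ with $(\alpha_M\otimes\alpha_H)\circ\rho=\rho\circ\alpha_M$,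 $(\alpha_M\otimes\Delta_H)\circ\rho=(\rho\otimes\alpha_H)\circ\rho$; $M$ is an $H$-bicomodule if it has both and $(\lambda\otimes\alpha_H)\circ\rho=(\alpha_H\otimes\rho)\circ\lambda$. A left (right) $H$-comodule Hom-algebra is a Hom-associative algebra with a left (right) comodule structure that is a morphism of Hom-associative algebras into $H\otimes D$ ($D\otimes H$); an $H$-bicomodule Hom-algebra is both a left and right $H$-comodule Hom-algebra whose structures form an $H$-bicomodule. A left-left Yetter-Drinfeld module over $H$ is $(M,\alpha_M)$ that is a left $H$-module (action with $\alpha_M(h\cdot m)=\alpha_H(h)\cdot\alpha_M(m)$, $\alpha_H(h)\cdot(h'\cdot m)=(hh')\cdot\alpha_M(m)$) and a left $H$-comodule $m\mapsto m_{(-1)}\otimes m_{(0)}$ such that $(h_1\cdot m)_{(-1)}\alpha_H^2(h_2)\otimes(h_1\cdot m)_{(0)}=\alpha_H^2(h_1)\alpha_H(m_{(-1)})\otimes\alpha_H(h_2)\cdot m_{(0)}$. *)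

(* Defs.v *)
From HB Require Import structures.
From mathcomp Require Import all_boot all_order all_algebra.
Set Implicit Arguments. Unset Strict Implicit. Unset Printing Implicit Defensive.
Import GRing.Theory.
Local Open Scope ring_scope.

(* An element of U (x) V is represented by a finite list of pure tensors     *)
(* [:: (u1,v1); ...] standing for u1 (x) v1 + ... ; sums are concatenation.  *)
(* Two representatives are equal in U (x) V iff every bilinear form          *)
(* U x V -> K takes the same value on them (over a field, bilinear forms    *)
(* separate the points of U (x) V).  Similarly for 3- and 4-fold tensors,    *)
(* represented by lists of tuples ((u,v),w) resp. (((u,v),w),x).            *)

Section Tensors.
Variable K : fieldType.

Definition lin1 (U : lmodType K) (f : U -> K) :=
  forall (a : K) (u v : U), f (a *: u + v) = a * f u + f v.

Definition linmap (U V : lmodType K) (f : U -> V) :=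
  forall (a : K) (u v : U), f (a *: u + v) = a *: f u + f v.

Definition bilinmap (U V W : lmodType K) (f : U -> V -> W) :=
  (forall v, linmap (fun u => f u v)) /\ (forall u, linmap (f u)).

Definition bilin (U V : lmodType K) (f : U -> V -> K) :=
  (forall v, lin1 (fun u => f u v)) /\ (forall u, lin1 (f u)).

Definition trilin (U V W : lmodType K) (f : U -> V -> W -> K) :=
  [/\ forall v w, lin1 (fun u => f u v w),
      forall u w, lin1 (fun v => f u v w) &
      forall u v, lin1 (f u v)].

Definition quadlin (U V W X : lmodType K) (f : U -> V -> W -> X -> K) :=
  [/\ forall v w x, lin1 (fun u => f u v w x),
      forall u w x, lin1 (fun v => f u v w x),
      forall u v x, lin1 (fun w => f u v w x) &
      forall u v w, lin1 (f u v w)].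

Definition teq2 (U V : lmodType K) (s t : seq (U * V)) :=
  forall f : U -> V -> K, bilin f ->
    \sum_(p <- s) f p.1 p.2 = \sum_(p <- t) f p.1 p.2.

Definition teq3 (U V W : lmodType K) (s t : seq (U * V * W)) :=
  forall f : U -> V -> W -> K, trilin f ->
    \sum_(p <- s) f p.1.1 p.1.2 p.2 = \sum_(p <- t) f p.1.1 p.1.2 p.2.

Definition teq4 (U V W X : lmodType K) (s t : seq (U * V * W * X)) :=
  forall f : U -> V -> W -> X -> K, quadlin f ->
    \sum_(p <- s) f p.1.1.1 p.1.1.2 p.1.2 p.2 =
    \sum_(p <- t) f p.1.1.1 p.1.1.2 p.1.2 p.2.

Definition tscale2 (U V : lmodType K) (a : K) (s : seq (U * V)) :=
  [seq (a *: p.1, p.2) | p <- s].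
Definition tscale3 (U V W : lmodType K) (a : K) (s : seq (U * V * W)) :=
  [seq (a *: p.1.1, p.1.2, p.2) | p <- s].

Definition tlin2 (U V W : lmodType K) (D : U -> seq (V * W)) :=
  forall (a : K) (u v : U), teq2 (D (a *: u + v)) (tscale2 a (D u) ++ D v).

(* Hom-structures (no (co)units).                                           *)

Definition HomAssoc (A : lmodType K) (mu : A -> A -> A) (alpha : A -> A) :=
  [/\ linmap alpha, bilinmap mu,
      forall x y, alpha (mu x y) = mu (alpha x) (alpha y) &
      forall x y z, mu (alpha x) (mu y z) = mu (mu x y) (alpha z)].

Definition HomBialgebra (H : lmodType K) (mu : H -> H -> H)
    (Delta : H -> seq (H * H)) (alpha : H -> H) :=
  [/\ HomAssoc mu alpha, tlin2 Delta,
      forall h, teq3 [seq (q.1, q.2, alpha p.2) | p <- Delta h, q <- Delta p.1]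
                     [seq (alpha p.1, q.1, q.2) | p <- Delta h, q <- Delta p.2],
      forall h h', teq2 (Delta (mu h h'))
                        [seq (mu p.1 p'.1, mu p.2 p'.2) | p <- Delta h, p' <- Delta h'] &
      forall h, teq2 (Delta (alpha h)) [seq (alpha p.1, alpha p.2) | p <- Delta h]].

Definition ModHomAlg (H A : lmodType K) (muH : H -> H -> H)
    (DeltaH : H -> seq (H * H)) (alphaH : H -> H)
    (muA : A -> A -> A) (alphaA : A -> A) (act : H -> A -> A) :=
  [/\ HomAssoc muA alphaA, bilinmap act,
      forall h a, alphaA (act h a) = act (alphaH h) (alphaA a),
      forall h h' a, act (alphaH h) (act h' a) = act (muH h h') (alphaA a) &
      forall h a a', act (alphaH (alphaH h)) (muA a a') =
                     \sum_(q <- DeltaH h) muA (act q.1 a) (act q.2 a')].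

Definition LComod (H M : lmodType K) (DeltaH : H -> seq (H * H)) (alphaH : H -> H)
    (alphaM : M -> M) (lam : M -> seq (H * M)) :=
  [/\ tlin2 lam,
      forall m, teq2 [seq (alphaH p.1, alphaM p.2) | p <- lam m] (lam (alphaM m)) &
      forall m, teq3 [seq (q.1, q.2, alphaM p.2) | p <- lam m, q <- DeltaH p.1]
                     [seq (alphaH p.1, q.1, q.2) | p <- lam m, q <- lam p.2]].

Definition LComodHomAlg (H A : lmodType K) (muH : H -> H -> H)
    (DeltaH : H -> seq (H * H)) (alphaH : H -> H)
    (muA : A -> A -> A) (alphaA : A -> A) (lam : A -> seq (H * A)) :=
  [/\ HomAssoc muA alphaA, LComod DeltaH alphaH alphaA lam &
      forall a a', teq2 (lam (muA a a'))
                        [seq (muH p.1 p'.1, muA p.2 p'.2) | p <- lam a, p' <- lam a']].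

Definition YDcompat (H M : lmodType K) (muH : H -> H -> H)
    (DeltaH : H -> seq (H * H)) (alphaH : H -> H)
    (act : H -> M -> M) (lam : M -> seq (H * M)) :=
  forall h m,
    teq2 [seq (muH u.1 (alphaH (alphaH q.2)), u.2) | q <- DeltaH h, u <- lam (act q.1 m)]
         [seq (muH (alphaH (alphaH q.1)) (alphaH u.1), act (alphaH q.2) u.2)
            | q <- DeltaH h, u <- lam m].

Definition LLYD (H M : lmodType K) (muH : H -> H -> H)
    (DeltaH : H -> seq (H * H)) (alphaH : H -> H)
    (alphaM : M -> M) (act : H -> M -> M) (lam : M -> seq (H * M)) :=
  [/\ linmap alphaM, bilinmap act,
      forall h m, alphaM (act h m) = act (alphaH h) (alphaM m),
      forall h h' m, act (alphaH h) (act h' m) = act (muH h h') (alphaM m) &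
      LComod DeltaH alphaH alphaM lam /\
      YDcompat muH DeltaH alphaH act lam].

Section Smash.
Variables (H A : lmodType K) (muH : H -> H -> H) (DeltaH : H -> seq (H * H))
  (alphaH alphaHinv : H -> H) (muA : A -> A -> A) (alphaA alphaAinv : A -> A)
  (act : H -> A -> A) (lamA : A -> seq (H * A)).

Definition smash_alpha (s : seq (A * H)) : seq (A * H) :=
  [seq (alphaA p.1, alphaH p.2) | p <- s].

(* (a # h)(a' # h') = a (alpha_H^-2(h1) . alpha_A^-1(a')) # alpha_H^-1(h2) h' *)
Definition smash_mul (s t : seq (A * H)) : seq (A * H) :=
  [seq (muA pp.1.1 (act (alphaHinv (alphaHinv q.1)) (alphaAinv pp.2.1)),
        muH (alphaHinv q.2) pp.2.2)
     | pp <- [seq (p, p') | p <- s, p' <- t], q <- DeltaH pp.1.2].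

Definition smash_rho (s : seq (A * H)) : seq (A * H * H) :=
  [seq (alphaA p.1, q.1, q.2) | p <- s, q <- DeltaH p.2].

Definition smash_lam (s : seq (A * H)) : seq (H * A * H) :=
  [seq (muH pu.2.1 q.1, pu.2.2, q.2)
     | pu <- [seq (p, u) | p <- s, u <- lamA p.1], q <- DeltaH pu.1.2].

Definition smash_HomAssoc :=
  [/\ (forall s s', teq2 s s' -> teq2 (smash_alpha s) (smash_alpha s')),
      (forall (a : K) s s', teq2 (smash_alpha (tscale2 a s ++ s'))
                                 (tscale2 a (smash_alpha s) ++ smash_alpha s')),
      (forall s s' t, teq2 s s' ->
          teq2 (smash_mul s t) (smash_mul s' t) /\ teq2 (smash_mul t s) (smash_mul t s')),
      (forall (a : K) s s' t,
          teq2 (smash_mul (tscale2 a s ++ s') t)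
               (tscale2 a (smash_mul s t) ++ smash_mul s' t) /\
          teq2 (smash_mul t (tscale2 a s ++ s'))
               (tscale2 a (smash_mul t s) ++ smash_mul t s')) &
      (forall s t, teq2 (smash_alpha (smash_mul s t))
                        (smash_mul (smash_alpha s) (smash_alpha t))) /\
      (forall s t u, teq2 (smash_mul (smash_alpha s) (smash_mul t u))
                          (smash_mul (smash_mul s t) (smash_alpha u)))].

Definition smash_RComodHomAlg :=
  [/\
      (forall s s', teq2 s s' -> teq3 (smash_rho s) (smash_rho s')),
      (forall (a : K) s s', teq3 (smash_rho (tscale2 a s ++ s'))
                                 (tscale3 a (smash_rho s) ++ smash_rho s')),
      (forall s, teq3 [seq (alphaA p.1.1, alphaH p.1.2, alphaH p.2) | p <- smash_rho s]
                      (smash_rho (smash_alpha s))),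
      (forall s, teq4 [seq (alphaA p.1.1, alphaH p.1.2, q.1, q.2)
                         | p <- smash_rho s, q <- DeltaH p.2]
                      [seq (r.1.1, r.1.2, r.2, alphaH p.2)
                         | p <- smash_rho s, r <- smash_rho [:: (p.1.1, p.1.2)]]) &
      (forall s t, teq3 (smash_rho (smash_mul s t))
                        [seq (r.1, r.2, muH pp.1.2 pp.2.2)
                           | pp <- [seq (p, p') | p <- smash_rho s, p' <- smash_rho t],
                             r <- smash_mul [:: pp.1.1] [:: pp.2.1]])].

Definition smash_LComodHomAlg :=
  [/\ (forall s s', teq2 s s' -> teq3 (smash_lam s) (smash_lam s')),
      (forall (a : K) s s', teq3 (smash_lam (tscale2 a s ++ s'))
                                 (tscale3 a (smash_lam s) ++ smash_lam s')),
      (forall s, teq3 [seq (alphaH p.1.1, alphaA p.1.2, alphaH p.2) | p <- smash_lam s]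
                      (smash_lam (smash_alpha s))),
      (forall s, teq4 [seq (q.1, q.2, alphaA p.1.2, alphaH p.2)
                         | p <- smash_lam s, q <- DeltaH p.1.1]
                      [seq (alphaH p.1.1, r.1.1, r.1.2, r.2)
                         | p <- smash_lam s, r <- smash_lam [:: (p.1.2, p.2)]]) &
      (forall s t, teq3 (smash_lam (smash_mul s t))
                        [seq (muH pp.1.1.1 pp.2.1.1, r.1, r.2)
                           | pp <- [seq (p, p') | p <- smash_lam s, p' <- smash_lam t],
                             r <- smash_mul [:: (pp.1.1.2, pp.1.2)]
                                            [:: (pp.2.1.2, pp.2.2)]])].

Definition smash_bicomod_compat :=
  forall s, teq4 [seq (r.1.1, r.1.2, r.2, alphaH p.2)
                    | p <- smash_rho s, r <- smash_lam [:: (p.1.1, p.1.2)]]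
                 [seq (alphaH p.1.1, r.1.1, r.1.2, r.2)
                    | p <- smash_lam s, r <- smash_rho [:: (p.1.2, p.2)]].

Definition smash_BicomodHomAlg :=
  [/\ smash_HomAssoc, smash_RComodHomAlg, smash_LComodHomAlg & smash_bicomod_compat].

End Smash.
End Tensors.

(* Main.v *)
Require Import Defs.
From mathcomp Require Import all_boot all_order all_algebra.
From Stdlib Require Import Setoid Morphisms.
Set Implicit Arguments. Unset Strict Implicit. Unset Printing Implicit Defensive.
Import GRing.Theory.
Local Open Scope ring_scope.

#[export] Instance bigop_ext (R I : Type) (idx : R) (r : seq I) :
  Proper (pointwise_relation I eq ==> eq) (@bigop R I idx r).
Proof. move=> F G E; rewrite unlock /reducebig; elim: r => //= x r ->; by rewrite E. Qed.

Section Basic.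
Variable K : fieldType.

Lemma lin1_0 (U : lmodType K) (f : U -> K) : lin1 f -> f 0 = 0.
Proof.
move=> Hf; have := Hf 1 0 0; rewrite scale1r addr0 mul1r => E.
by apply: (addIr (f 0)); rewrite add0r -E.
Qed.
Lemma lin1_Z (U : lmodType K) (f : U -> K) a u : lin1 f -> f (a *: u) = a * f u.
Proof. by move=> Hf; have := Hf a u 0; rewrite !addr0 (lin1_0 Hf) addr0. Qed.
Lemma lin1_D (U : lmodType K) (f : U -> K) u v : lin1 f -> f (u + v) = f u + f v.
Proof. by move=> Hf; have := Hf 1 u v; rewrite scale1r mul1r. Qed.
Lemma lin1_sumE (U : lmodType K) (f : U -> K) I (r : seq I) (F : I -> U) :
  lin1 f -> f (\sum_(i <- r) F i) = \sum_(i <- r) f (F i).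
Proof.
move=> Hf; elim: r => [|x r IH]; first by rewrite !big_nil (lin1_0 Hf).
by rewrite !big_cons (lin1_D _ _ Hf) IH.
Qed.

Lemma lm_0 (U V : lmodType K) (f : U -> V) : linmap f -> f 0 = 0.
Proof.
move=> Hf; have := Hf 1 0 0; rewrite !scale1r addr0 => E.
by apply: (addIr (f 0)); rewrite add0r -E.
Qed.
Lemma lm_Z (U V : lmodType K) (f : U -> V) a u : linmap f -> f (a *: u) = a *: f u.
Proof. by move=> Hf; have := Hf a u 0; rewrite !addr0 (lm_0 Hf) addr0. Qed.
Lemma lm_D (U V : lmodType K) (f : U -> V) u v : linmap f -> f (u + v) = f u + f v.
Proof. by move=> Hf; have := Hf 1 u v; rewrite !scale1r. Qed.
Lemma lm_sumE (U V : lmodType K) (f : U -> V) I (r : seq I) (F : I -> U) :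
  linmap f -> f (\sum_(i <- r) F i) = \sum_(i <- r) f (F i).
Proof.
move=> Hf; elim: r => [|x r IH]; first by rewrite !big_nil (lm_0 Hf).
by rewrite !big_cons (lm_D _ _ Hf) IH.
Qed.

Lemma lin1_add (U : lmodType K) (f g : U -> K) :
  lin1 f -> lin1 g -> lin1 (fun x => f x + g x).
Proof.
move=> Hf Hg a u v; rewrite Hf Hg mulrDr.
by rewrite -!addrA; congr (_ + _); rewrite addrCA.
Qed.
Lemma lin1_sum (U : lmodType K) I (r : seq I) (F : I -> U -> K) :
  (forall i, lin1 (F i)) -> lin1 (fun x => \sum_(i <- r) F i x).
Proof.
move=> HF a u v; elim: r => [|i r IH]; first by rewrite !big_nil mulr0 addr0.
rewrite !big_cons IH HF mulrDr -!addrA; congr (_ + _).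
by rewrite !addrA [_ + F i v]addrC.
Qed.
Lemma lin1_comp (U V : lmodType K) (g : V -> K) (M : U -> V) :
  lin1 g -> linmap M -> lin1 (fun x => g (M x)).
Proof. by move=> Hg HM a u v; rewrite HM Hg. Qed.
Lemma lin1_sumD (U V W X : lmodType K) (D : V -> seq (W * X)) (M : U -> V)
   (G : W * X -> K) : tlin2 D -> linmap M ->
  (forall y, lin1 (fun x => G (x, y))) -> (forall x, lin1 (fun y => G (x, y))) ->
  lin1 (fun u => \sum_(q <- D (M u)) G q).
Proof.
move=> HD HM H1 H2 a u v; rewrite HM.
have E : forall s : seq (W * X), \sum_(q <- s) G q = \sum_(q <- s) G (q.1, q.2).
  by move=> s; apply: eq_bigr => -[].
rewrite !E (HD a (M u) (M v) (fun x y => G (x, y))); last first.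
  by split=> [y|x]; [apply: H1|apply: H2].
rewrite big_cat big_map /= big_distrr /=; congr (_ + _); apply: eq_bigr => q _.
by rewrite (lin1_Z _ _ (H1 _)).
Qed.

Lemma lm_id (U : lmodType K) : linmap (fun x : U => x).
Proof. by []. Qed.
Lemma lm_comp (U V W : lmodType K) (L : V -> W) (M : U -> V) :
  linmap L -> linmap M -> linmap (fun x => L (M x)).
Proof. by move=> HL HM a u v; rewrite HM HL. Qed.
Lemma lm_bl1 (U V W X : lmodType K) (m : V -> W -> X) (M : U -> V) b :
  bilinmap m -> linmap M -> linmap (fun x => m (M x) b).
Proof. by move=> [Hm _] HM a u v; rewrite HM Hm. Qed.
Lemma lm_bl2 (U V W X : lmodType K) (m : V -> W -> X) (M : U -> W) b :
  bilinmap m -> linmap M -> linmap (fun x => m b (M x)).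
Proof. by move=> [_ Hm] HM a u v; rewrite HM Hm. Qed.

Lemma bi1 (U V W : lmodType K) (f : V -> W -> K) (M : U -> V) b :
  bilin f -> linmap M -> lin1 (fun x => f (M x) b).
Proof. by move=> [H _] HM; apply: (lin1_comp (g := fun y => f y b)). Qed.
Lemma bi2 (U V W : lmodType K) (f : V -> W -> K) (M : U -> W) b :
  bilin f -> linmap M -> lin1 (fun x => f b (M x)).
Proof. by move=> [_ H] HM; apply: (lin1_comp (g := fun y => f b y)). Qed.
Lemma tri1 (U V W X : lmodType K) (f : V -> W -> X -> K) (M : U -> V) b c :
  trilin f -> linmap M -> lin1 (fun x => f (M x) b c).
Proof. by move=> [H _ _] HM; apply: (lin1_comp (g := fun y => f y b c)). Qed.
Lemma tri2 (U V W X : lmodType K) (f : V -> W -> X -> K) (M : U -> W) b c :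
  trilin f -> linmap M -> lin1 (fun x => f b (M x) c).
Proof. by move=> [_ H _] HM; apply: (lin1_comp (g := fun y => f b y c)). Qed.
Lemma tri3 (U V W X : lmodType K) (f : V -> W -> X -> K) (M : U -> X) b c :
  trilin f -> linmap M -> lin1 (fun x => f b c (M x)).
Proof. by move=> [_ _ H] HM; apply: (lin1_comp (g := fun y => f b c y)). Qed.
Lemma quad1 (U V W X Y : lmodType K) (f : V -> W -> X -> Y -> K) (M : U -> V) b c d :
  quadlin f -> linmap M -> lin1 (fun x => f (M x) b c d).
Proof. by move=> [H _ _ _] HM; apply: (lin1_comp (g := fun y => f y b c d)). Qed.
Lemma quad2 (U V W X Y : lmodType K) (f : V -> W -> X -> Y -> K) (M : U -> W) b c d :
  quadlin f -> linmap M -> lin1 (fun x => f b (M x) c d).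
Proof. by move=> [_ H _ _] HM; apply: (lin1_comp (g := fun y => f b y c d)). Qed.
Lemma quad3 (U V W X Y : lmodType K) (f : V -> W -> X -> Y -> K) (M : U -> X) b c d :
  quadlin f -> linmap M -> lin1 (fun x => f b c (M x) d).
Proof. by move=> [_ _ H _] HM; apply: (lin1_comp (g := fun y => f b c y d)). Qed.
Lemma quad4 (U V W X Y : lmodType K) (f : V -> W -> X -> Y -> K) (M : U -> Y) b c d :
  quadlin f -> linmap M -> lin1 (fun x => f b c d (M x)).
Proof. by move=> [_ _ _ H] HM; apply: (lin1_comp (g := fun y => f b c d y)). Qed.

Lemma pairE2 (U V : lmodType K) (s : seq (U * V)) (G : U * V -> K) :
  \sum_(p <- s) G p = \sum_(p <- s) G (p.1, p.2).
Proof. by apply: eq_bigr => -[]. Qed.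
Lemma pairE3 (U V W : lmodType K) (s : seq (U * V * W)) (G : U * V * W -> K) :
  \sum_(p <- s) G p = \sum_(p <- s) G (p.1.1, p.1.2, p.2).
Proof. by apply: eq_bigr => -[[]]. Qed.
Lemma pairE4 (U V W X : lmodType K) (s : seq (U * V * W * X)) (G : U * V * W * X -> K) :
  \sum_(p <- s) G p = \sum_(p <- s) G (p.1.1.1, p.1.1.2, p.1.2, p.2).
Proof. by apply: eq_bigr => -[[[]]]. Qed.

Lemma teqS2 (U V : lmodType K) (s t : seq (U * V)) (G : U * V -> K) :
  teq2 s t -> bilin (fun x y => G (x, y)) -> \sum_(p <- s) G p = \sum_(p <- t) G p.
Proof. by move=> E HG; rewrite pairE2 (E _ HG) -pairE2. Qed.
Lemma teqS3 (U V W : lmodType K) (s t : seq (U * V * W)) (G : U * V * W -> K) :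
  teq3 s t -> trilin (fun x y z => G (x, y, z)) -> \sum_(p <- s) G p = \sum_(p <- t) G p.
Proof. by move=> E HG; rewrite pairE3 (E _ HG) -pairE3. Qed.

Lemma teq2_refl (U V : lmodType K) (s : seq (U * V)) : teq2 s s.
Proof. by []. Qed.
Lemma teq2_sym (U V : lmodType K) (s t : seq (U * V)) : teq2 s t -> teq2 t s.
Proof. by move=> E f Hf; rewrite E. Qed.
Lemma teq2_trans (U V : lmodType K) (s t u : seq (U * V)) : teq2 s t -> teq2 t u -> teq2 s u.
Proof. by move=> E1 E2 f Hf; rewrite E1 ?E2. Qed.

Lemma bilin_sum1 (U V : lmodType K) (f : U -> V -> K) I (r : seq I) (F : I -> U) y :
  bilin f -> f (\sum_(i <- r) F i) y = \sum_(i <- r) f (F i) y.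
Proof. by move=> [H1 _]; rewrite (lin1_sumE _ _ (H1 y)). Qed.
Lemma bilin_sum2 (U V : lmodType K) (f : U -> V -> K) I (r : seq I) (F : I -> V) x :
  bilin f -> f x (\sum_(i <- r) F i) = \sum_(i <- r) f x (F i).
Proof. by move=> [_ H2]; rewrite (lin1_sumE _ _ (H2 x)). Qed.
Lemma bilinmap_sum1 (U V W : lmodType K) (f : U -> V -> W) I (r : seq I) (F : I -> U) y :
  bilinmap f -> f (\sum_(i <- r) F i) y = \sum_(i <- r) f (F i) y.
Proof. by move=> [H1 _]; rewrite (lm_sumE _ _ (H1 y)). Qed.
Lemma bilinmap_sum2 (U V W : lmodType K) (f : U -> V -> W) I (r : seq I) (F : I -> V) x :
  bilinmap f -> f x (\sum_(i <- r) F i) = \sum_(i <- r) f x (F i).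
Proof. by move=> [_ H2]; rewrite (lm_sumE _ _ (H2 x)). Qed.
Lemma sum_seq1 I (x : I) (F : I -> K) : \sum_(i <- [:: x]) F i = F x.
Proof. by rewrite big_seq1. Qed.
Lemma xchg I J (r1 : seq I) (r2 : seq J) (F : I -> J -> K) :
  \sum_(i <- r1) \sum_(j <- r2) F i j = \sum_(j <- r2) \sum_(i <- r1) F i j.
Proof. exact: exchange_big. Qed.
End Basic.

Ltac linm := first
  [ exact: lm_id
  | match goal with H : bilinmap _ |- linmap _ =>
      first [ apply: (lm_bl1 _ H); linm | apply: (lm_bl2 _ H); linm ] end
  | match goal with H : linmap _ |- linmap _ =>
      apply: (lm_comp H); linm end ].

Ltac lins := first
  [ apply: lin1_add; lins
  | apply: lin1_sum => ?; lins
  | apply: lin1_sumD; [eassumption | linm | move=> ? /=; lins | move=> ? /=; lins]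
  | match goal with
    | H : bilin _ |- lin1 _ =>
        first [ apply: (bi1 _ H); linm | apply: (bi2 _ H); linm ]
    | H : trilin _ |- lin1 _ =>
        first [ apply: (tri1 _ _ H); linm | apply: (tri2 _ _ H); linm
              | apply: (tri3 _ _ H); linm ]
    | H : quadlin _ |- lin1 _ =>
        first [ apply: (quad1 _ _ _ H); linm | apply: (quad2 _ _ _ H); linm
              | apply: (quad3 _ _ _ H); linm | apply: (quad4 _ _ _ H); linm ]
    end ].

Ltac mlins := repeat split; move=> * /=; lins.

Ltac srw_in L := first [ rewrite L; try (by mlins) | under eq_bigr => ? _ do srw_in L ].
Ltac srw L := first [ rewrite L; try (by mlins) | under [LHS]eq_bigr => ? _ do srw_in L ].
Ltac norm := rewrite ?/smash_alpha ?/smash_mul ?/smash_rho ?/smash_lam;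
  repeat (setoid_rewrite big_map || setoid_rewrite big_allpairs_dep || setoid_rewrite sum_seq1); simpl.
Ltac srwR L := symmetry; srw L; symmetry.

Section Main.
Variables (K : fieldType) (H A : lmodType K)
  (muH : H -> H -> H) (D : H -> seq (H * H)) (aH aHi : H -> H)
  (muA : A -> A -> A) (aA aAi : A -> A)
  (act : H -> A -> A) (lam : A -> seq (H * A)).
Hypotheses (HaH : linmap aH) (HmuH : bilinmap muH)
  (aH_mul : forall x y, aH (muH x y) = muH (aH x) (aH y))
  (HassH : forall x y z, muH (aH x) (muH y z) = muH (muH x y) (aH z))
  (HD : tlin2 D)
  (HCA : forall h, teq3 [seq (q.1, q.2, aH p.2) | p <- D h, q <- D p.1]
                     [seq (aH p.1, q.1, q.2) | p <- D h, q <- D p.2])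
  (HDm : forall h h', teq2 (D (muH h h'))
                        [seq (muH p.1 p'.1, muH p.2 p'.2) | p <- D h, p' <- D h'])
  (HDa : forall h, teq2 (D (aH h)) [seq (aH p.1, aH p.2) | p <- D h])
  (HaA : linmap aA) (HmuA : bilinmap muA)
  (aA_mul : forall x y, aA (muA x y) = muA (aA x) (aA y))
  (HassA : forall x y z, muA (aA x) (muA y z) = muA (muA x y) (aA z))
  (Hact : bilinmap act)
  (aA_act : forall h a, aA (act h a) = act (aH h) (aA a))
  (M2 : forall h h' a, act (aH h) (act h' a) = act (muH h h') (aA a))
  (M3 : forall h a a', act (aH (aH h)) (muA a a') =
                     \sum_(q <- D h) muA (act q.1 a) (act q.2 a'))
  (aHK : cancel aH aHi) (aKH : cancel aHi aH) (aAK : cancel aA aAi) (aKA : cancel aAi aA)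
  (Hlam : tlin2 lam)
  (Hla : forall m, teq2 [seq (aH p.1, aA p.2) | p <- lam m] (lam (aA m)))
  (HLCA : forall m, teq3 [seq (q.1, q.2, aA p.2) | p <- lam m, q <- D p.1]
                     [seq (aH p.1, q.1, q.2) | p <- lam m, q <- lam p.2])
  (Hlm : forall a a', teq2 (lam (muA a a'))
                        [seq (muH p.1 p'.1, muA p.2 p'.2) | p <- lam a, p' <- lam a'])
  (HYD : YDcompat muH D aH act lam).

Lemma kH1 x : aHi (aH x) = x. Proof. exact: aHK. Qed.
Lemma kH2 x : aH (aHi x) = x. Proof. exact: aKH. Qed.
Lemma kA1 x : aAi (aA x) = x. Proof. exact: aAK. Qed.
Lemma kA2 x : aA (aAi x) = x. Proof. exact: aKA. Qed.

Ltac canc := repeat first [setoid_rewrite kH1 | setoid_rewrite kH2 | setoid_rewrite kA1 | setoid_rewrite kA2].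

Lemma HaHi : linmap aHi.
Proof.
move=> a u v; rewrite -{1}(aKH u) -{1}(aKH v).
by rewrite -(lm_Z _ _ HaH) -(lm_D _ _ HaH) aHK.
Qed.
Lemma HaAi : linmap aAi.
Proof.
move=> a u v; rewrite -{1}(aKA u) -{1}(aKA v).
by rewrite -(lm_Z _ _ HaA) -(lm_D _ _ HaA) aAK.
Qed.
Lemma aHi_mul x y : aHi (muH x y) = muH (aHi x) (aHi y).
Proof. by rewrite -{1}(aKH x) -{1}(aKH y) -aH_mul aHK. Qed.
Lemma aAi_mul x y : aAi (muA x y) = muA (aAi x) (aAi y).
Proof. by rewrite -{1}(aKA x) -{1}(aKA y) -aA_mul aAK. Qed.
Lemma aAi_act h a : aAi (act h a) = act (aHi h) (aAi a).
Proof. by rewrite -{1}(aKH h) -{1}(aKA a) -aA_act aAK. Qed.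

Let HaHi' := HaHi.
Let HaAi' := HaAi.

Lemma DaE h (G : H * H -> K) : bilin (fun x y => G (x, y)) ->
  \sum_(q <- D (aH h)) G q = \sum_(q <- D h) G (aH q.1, aH q.2).
Proof. by move=> HG; rewrite (teqS2 (HDa h)) // big_map. Qed.

Lemma DbE h (G : H * H -> K) : bilin (fun x y => G (x, y)) ->
  \sum_(q <- D (aHi h)) G q = \sum_(q <- D h) G (aHi q.1, aHi q.2).
Proof.
move=> HG; rewrite -{2}(aKH h) DaE /=; last by mlins.
by apply: eq_bigr => -[x y] _ /=; rewrite !aHK.
Qed.

Lemma DmE h h' (G : H * H -> K) : bilin (fun x y => G (x, y)) ->
  \sum_(q <- D (muH h h')) G q =
  \sum_(p <- D h) \sum_(p' <- D h') G (muH p.1 p'.1, muH p.2 p'.2).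
Proof. by move=> HG; rewrite (teqS2 (HDm h h')) // big_allpairs_dep. Qed.

Lemma CAE h (F : H -> H -> H -> K) : trilin F ->
  \sum_(p <- D h) \sum_(q <- D p.1) F q.1 q.2 (aH p.2) =
  \sum_(p <- D h) \sum_(q <- D p.2) F (aH p.1) q.1 q.2.
Proof. by move=> HF; have := HCA h HF; rewrite !big_allpairs_dep. Qed.

Lemma LaE m (G : H * A -> K) : bilin (fun x y => G (x, y)) ->
  \sum_(u <- lam (aA m)) G u = \sum_(u <- lam m) G (aH u.1, aA u.2).
Proof. by move=> HG; rewrite -(teqS2 (Hla m)) // big_map. Qed.

Lemma LbE m (G : H * A -> K) : bilin (fun x y => G (x, y)) ->
  \sum_(u <- lam (aAi m)) G u = \sum_(u <- lam m) G (aHi u.1, aAi u.2).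
Proof.
move=> HG; rewrite -{2}(aKA m) LaE /=; last by mlins.
by apply: eq_bigr => -[x y] _ /=; rewrite aHK aAK.
Qed.

Lemma LmE a a' (G : H * A -> K) : bilin (fun x y => G (x, y)) ->
  \sum_(u <- lam (muA a a')) G u =
  \sum_(p <- lam a) \sum_(p' <- lam a') G (muH p.1 p'.1, muA p.2 p'.2).
Proof. by move=> HG; rewrite (teqS2 (Hlm a a')) // big_allpairs_dep. Qed.

Lemma LCAE m (F : H -> H -> A -> K) : trilin F ->
  \sum_(p <- lam m) \sum_(q <- D p.1) F q.1 q.2 (aA p.2) =
  \sum_(p <- lam m) \sum_(q <- lam p.2) F (aH p.1) q.1 q.2.
Proof. by move=> HF; have := HLCA m HF; rewrite !big_allpairs_dep. Qed.

Lemma YDE h m (G : H * A -> K) : bilin (fun x y => G (x, y)) ->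
  \sum_(q <- D h) \sum_(u <- lam (act q.1 m)) G (muH u.1 (aH (aH q.2)), u.2) =
  \sum_(q <- D h) \sum_(u <- lam m) G (muH (aH (aH q.1)) (aH u.1), act (aH q.2) u.2).
Proof.
move=> HG; have := HYD h m HG; rewrite !big_allpairs_dep /=.
by move=> E; exact: E.
Qed.

Lemma CAE2 h (F : H -> H -> H -> K) : trilin F ->
  \sum_(p <- D h) \sum_(q <- D p.1) F q.1 q.2 p.2 =
  \sum_(p <- D h) \sum_(q <- D p.2) F (aH p.1) q.1 (aHi q.2).
Proof.
move=> HF; have := CAE h (F := fun x y z => F x y (aHi z)).
by setoid_rewrite kH1 => ->; last by mlins.
Qed.

Lemma M3b h a a' : act h (muA a a') = \sum_(q <- D (aHi (aHi h))) muA (act q.1 a) (act q.2 a').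
Proof. by rewrite -M3 !kH2. Qed.
Lemma M2b x y m : act x (act y m) = act (muH (aHi x) y) (aA m).
Proof. by rewrite -M2 kH2. Qed.
Lemma HassA' x y z : muA (muA x y) z = muA (aA x) (muA y (aAi z)).
Proof. by rewrite HassA kA2. Qed.
Lemma HassH' x y z : muH (muH x y) z = muH (aH x) (muH y (aHi z)).
Proof. by rewrite HassH kH2. Qed.
Lemma aHi_mulE x y : aHi (muH x y) = muH (aHi x) (aHi y). Proof. exact: aHi_mul. Qed.
Lemma aAi_mulE x y : aAi (muA x y) = muA (aAi x) (aAi y). Proof. exact: aAi_mul. Qed.
Lemma aAi_actE h a : aAi (act h a) = act (aHi h) (aAi a). Proof. exact: aAi_act. Qed.
Lemma muA_sumr x I (r : seq I) (F : I -> A) :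
  muA x (\sum_(i <- r) F i) = \sum_(i <- r) muA x (F i).
Proof. exact: bilinmap_sum2. Qed.
Lemma muA_suml x I (r : seq I) (F : I -> A) :
  muA (\sum_(i <- r) F i) x = \sum_(i <- r) muA (F i) x.
Proof. exact: bilinmap_sum1. Qed.

Local Notation alp := (smash_alpha aH aA).
Local Notation smul := (smash_mul muH D aHi muA aAi act).
Local Notation rho := (smash_rho D aA).
Local Notation lamS := (smash_lam muH D lam).

Lemma sum_tscale2 (U V : lmodType K) a (s : seq (U * V)) (G : U * V -> K) :
  bilin (fun x y => G (x, y)) ->
  \sum_(p <- tscale2 a s) G p = a * \sum_(p <- s) G p.
Proof.
move=> [H1 _]; rewrite big_map big_distrr /=; apply: eq_bigr => -[x y] _ /=.
exact: (lin1_Z _ _ (H1 y)).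
Qed.
Lemma sum_tscale3 (U V W : lmodType K) a (s : seq (U * V * W)) (G : U * V * W -> K) :
  trilin (fun x y z => G (x, y, z)) ->
  \sum_(p <- tscale3 a s) G p = a * \sum_(p <- s) G p.
Proof.
move=> [H1 _ _]; rewrite big_map big_distrr /=; apply: eq_bigr => -[[x y] z] _ /=.
exact: (lin1_Z _ _ (H1 y z)).
Qed.

Lemma HA1 s s' : teq2 s s' -> teq2 (alp s) (alp s').
Proof. by move=> E f Hf; rewrite !big_map (teqS2 E) //; mlins. Qed.

Lemma HA2 a s s' : teq2 (alp (tscale2 a s ++ s')) (tscale2 a (alp s) ++ alp s').
Proof.
move=> f Hf; rewrite /smash_alpha map_cat !big_cat sum_tscale2; last by mlins.
by rewrite /tscale2 !big_map /= big_distrr; congr (_ + _); apply: eq_bigr => p _;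
  rewrite (lm_Z _ _ HaA) (lin1_Z _ _ (proj1 Hf _)).
Qed.

Lemma HA3 s s' t : teq2 s s' -> teq2 (smul s t) (smul s' t) /\ teq2 (smul t s) (smul t s').
Proof.
move=> E; split=> f Hf; rewrite /smash_mul !big_allpairs_dep /=.
  by rewrite (teqS2 E) //; mlins.
by apply: eq_bigr => p _; rewrite (teqS2 E) //; mlins.
Qed.

Lemma HA4 a s s' t :
  teq2 (smul (tscale2 a s ++ s') t) (tscale2 a (smul s t) ++ smul s' t) /\
  teq2 (smul t (tscale2 a s ++ s')) (tscale2 a (smul t s) ++ smul t s').
Proof.
split=> f Hf; rewrite /smash_mul big_cat sum_tscale2 ?big_allpairs_dep /=; try by mlins.
  by rewrite big_cat sum_tscale2 /=; mlins.
rewrite big_distrr -big_split /=; apply: eq_bigr => p _.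
by rewrite big_cat sum_tscale2 //; mlins.
Qed.

Lemma HA5 s t : teq2 (alp (smul s t)) (smul (alp s) (alp t)).
Proof.
move=> f Hf; norm.
srwR DaE; simpl.
setoid_rewrite aA_mul; setoid_rewrite aA_act; setoid_rewrite aH_mul.
canc.
by [].
Qed.

Lemma HA6 s t u : teq2 (smul (alp s) (smul t u)) (smul (smul s t) (alp u)).
Proof.
move=> f Hf; norm.
symmetry; under eq_bigr => p _ do under eq_bigr => p' _ do rewrite exchange_big.
symmetry.
apply: eq_bigr => -[a h] _; apply: eq_bigr => -[b g] _; apply: eq_bigr => -[c k] _ /=.
srw DaE; canc.
setoid_rewrite aAi_mulE; setoid_rewrite aAi_actE.
setoid_rewrite M3b; setoid_rewrite muA_sumr; setoid_rewrite (bilin_sum1 _ _ _ Hf).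
do 3! srw DbE; simpl.
setoid_rewrite M2b; canc.
rewrite exchange_big; under eq_bigr => r _ do rewrite exchange_big.
rewrite (CAE2 h (F := fun x y z => \sum_(z' <- D g) f (muA (aA a) (muA (act (aHi (aHi (aHi x))) (aAi b))
     (act (muH (aHi (aHi (aHi (aHi y)))) (aHi (aHi (aHi z'.1)))) (aAi c)))) (muH z (muH (aHi z'.2) k)))); last by mlins.
srwR DmE; srwR DbE; simpl.
setoid_rewrite HassA'; setoid_rewrite aAi_actE; setoid_rewrite aHi_mulE.
setoid_rewrite HassH'; canc.
by repeat setoid_rewrite aHi_mulE.
Qed.

Lemma R1 s s' : teq2 s s' -> teq3 (rho s) (rho s').
Proof. by move=> E f Hf; norm; rewrite (teqS2 E) //; mlins. Qed.

Lemma R2 a s s' : teq3 (rho (tscale2 a s ++ s')) (tscale3 a (rho s) ++ rho s').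
Proof.
move=> f Hf; rewrite /smash_rho big_allpairs_dep big_cat sum_tscale2 /=; last by mlins.
rewrite big_cat sum_tscale3; last by mlins.
by rewrite !big_allpairs_dep.
Qed.

Lemma R3 s : teq3 [seq (aA p.1.1, aH p.1.2, aH p.2) | p <- rho s] (rho (alp s)).
Proof. move=> f Hf; norm; by srwR DaE. Qed.

Lemma R4 s : teq4 [seq (aA p.1.1, aH p.1.2, q.1, q.2) | p <- rho s, q <- D p.2]
                  [seq (r.1.1, r.1.2, r.2, aH p.2) | p <- rho s, r <- rho [:: (p.1.1, p.1.2)]].
Proof.
move=> f Hf; norm; try setoid_rewrite big_seq1; simpl.
apply: eq_bigr => -[a h] _ /=; rewrite -CAE //; mlins.
Qed.

Lemma L1 s s' : teq2 s s' -> teq3 (lamS s) (lamS s').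
Proof. by move=> E f Hf; norm; rewrite (teqS2 E) //; mlins. Qed.

Lemma L2 a s s' : teq3 (lamS (tscale2 a s ++ s')) (tscale3 a (lamS s) ++ lamS s').
Proof.
move=> f Hf; rewrite /smash_lam big_allpairs_dep big_allpairs_dep big_cat sum_tscale2 /=; last by mlins.
rewrite big_cat sum_tscale3; last by mlins.
by rewrite !big_allpairs_dep.
Qed.

Lemma L3 s : teq3 [seq (aH p.1.1, aA p.1.2, aH p.2) | p <- lamS s] (lamS (alp s)).
Proof.
move=> f Hf; norm; srwR LaE; srwR DaE; simpl.
by setoid_rewrite aH_mul.
Qed.

Lemma L4 s : teq4 [seq (q.1, q.2, aA p.1.2, aH p.2) | p <- lamS s, q <- D p.1.1]
                  [seq (aH p.1.1, r.1.1, r.1.2, r.2) | p <- lamS s, r <- lamS [:: (p.1.2, p.2)]].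
Proof.
move=> f Hf; norm; try setoid_rewrite big_seq1; simpl.
apply: eq_bigr => -[a h] _ /=.
srw DmE; simpl.
under eq_bigr => u _ do rewrite exchange_big.
rewrite (LCAE a (F := fun x y z => \sum_(k <- D h) \sum_(w <- D k.1) f (muH x w.1) (muH y w.2) z (aH k.2))); last by mlins.
setoid_rewrite aH_mul.
symmetry. rewrite exchange_big. under eq_bigr => k _ do under eq_bigr => u _ do rewrite exchange_big.
under eq_bigr => k _ do rewrite exchange_big.
rewrite -(CAE h (F := fun x y z => \sum_(u <- lam a) \sum_(u' <- lam u.2) f (muH (aH u.1) x) (muH u'.1 y) u'.2 z)); last by mlins.
under eq_bigr => k _ do rewrite exchange_big.
rewrite exchange_big.
under eq_bigr => u _ do under eq_bigr => k _ do rewrite exchange_big.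
by under eq_bigr => u _ do rewrite exchange_big.
Qed.

Lemma B1 s : teq4 [seq (r.1.1, r.1.2, r.2, aH p.2) | p <- rho s, r <- lamS [:: (p.1.1, p.1.2)]]
                 [seq (aH p.1.1, r.1.1, r.1.2, r.2) | p <- lamS s, r <- rho [:: (p.1.2, p.2)]].
Proof.
move=> f Hf; norm; try setoid_rewrite big_seq1; simpl.
apply: eq_bigr => -[a h] _ /=.
srw LaE; simpl.
under eq_bigr => k _ do rewrite exchange_big.
rewrite (CAE h (F := fun x y z => \sum_(u <- lam a) f (muH (aH u.1) x) (aA u.2) y z)); last by mlins.
setoid_rewrite aH_mul.
symmetry; rewrite exchange_big.
by under eq_bigr => k _ do rewrite exchange_big.
Qed.

Lemma CAE3 h (G : H -> H -> H -> K) : trilin G ->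
  \sum_(p <- D h) \sum_(q <- D p.2) G p.1 q.1 q.2 =
  \sum_(p <- D h) \sum_(q <- D p.1) G (aHi q.1) q.2 (aH p.2).
Proof.
move=> HG; have := CAE h (F := fun x y z => G (aHi x) y z).
by setoid_rewrite kH1 => <-; last by mlins.
Qed.

Lemma YDE' h m (G : H * A -> K) : bilin (fun x y => G (x, y)) ->
  \sum_(w <- D h) \sum_(t <- lam (act (aHi (aHi (aHi w.1))) m)) G (muH t.1 (aHi w.2), t.2) =
  \sum_(w <- D h) \sum_(t <- lam m) G (muH (aHi w.1) (aH t.1), act (aHi (aHi w.2)) t.2).
Proof.
move=> HG; move: (YDE (aHi (aHi (aHi h))) m HG).
do 6! (rewrite DbE; last by mlins).
simpl; canc. by move=> ->.
Qed.

Lemma HH4 x y z w : muH (muH x y) (muH z w) = muH (aH x) (muH (aHi (muH y z)) w).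
Proof.
have E1 : muH (muH x y) (muH z w) = muH (aH x) (muH y (aHi (muH z w))).
  by rewrite HassH kH2.
rewrite E1 aHi_mul; congr (muH _ _).
by rewrite -{1}(kH2 y) HassH kH2 aHi_mul.
Qed.

Lemma L5 s t : teq3 (lamS (smul s t))
   [seq (muH pp.1.1.1 pp.2.1.1, r.1, r.2)
      | pp <- [seq (p, p') | p <- lamS s, p' <- lamS t],
        r <- smul [:: (pp.1.1.2, pp.1.2)] [:: (pp.2.1.2, pp.2.2)]].
Proof.
move=> f Hf; norm.
symmetry.
under eq_bigr => p _ do (under eq_bigr => u _ do rewrite xchg; rewrite xchg).
symmetry.
apply: eq_bigr => -[a h] _; apply: eq_bigr => -[b g] _ /=.
srw LmE; srw DmE; srw DbE; simpl.
under eq_bigr => q _ do (under eq_bigr => u _ do rewrite xchg; rewrite xchg).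
rewrite (CAE3 h (G := fun x y z => \sum_(u <- lam a) \sum_(t <- lam (act (aHi (aHi x)) (aAi b)))
   \sum_(z' <- D g) f (muH (muH u.1 t.1) (muH (aHi y) z'.1)) (muA u.2 t.2) (muH (aHi z) z'.2)));
   last by mlins.
canc.
setoid_rewrite HH4.
under [LHS]eq_bigr => q _ do rewrite xchg.
under [LHS]eq_bigr => q _ do under eq_bigr => u _ do (rewrite (YDE' q.1 (aAi b) (G := fun p => \sum_(z' <- D g) f (muH (aH u.1) (muH (aHi p.1) z'.1)) (muA u.2 p.2) (muH q.2 z'.2))); last by mlins).
srw LbE; simpl; canc; repeat setoid_rewrite aHi_mulE.
under [LHS]eq_bigr => q _ do rewrite xchg.
rewrite (CAE2 h (F := fun x y z => \sum_(u <- lam a) \sum_(t <- lam b) \sum_(z' <- D g)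
   f (muH (aH u.1) (muH (muH (aHi (aHi x)) (aHi t.1)) z'.1)) (muA u.2 (act (aHi (aHi y)) (aAi t.2))) (muH z z'.2)));
   last by mlins.
canc.
symmetry.
under [LHS]eq_bigr => u _ do under eq_bigr => k _ do under eq_bigr => u' _ do rewrite xchg.
under [LHS]eq_bigr => u _ do under eq_bigr => k _ do rewrite xchg.
rewrite xchg.
by under [LHS]eq_bigr => k _ do rewrite xchg.
Qed.

Lemma R5 s t : teq3 (rho (smul s t))
   [seq (r.1, r.2, muH pp.1.2 pp.2.2)
      | pp <- [seq (p, p') | p <- rho s, p' <- rho t],
        r <- smul [:: pp.1.1] [:: pp.2.1]].
Proof.
move=> f Hf; norm.
symmetry; under eq_bigr => p _ do rewrite exchange_big; symmetry.
apply: eq_bigr => -[a h] _; apply: eq_bigr => -[b g] _ /=.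
srw DmE; srw DbE; simpl.
setoid_rewrite aA_mul; setoid_rewrite aA_act; canc.
symmetry; under eq_bigr => k _ do rewrite exchange_big.
rewrite (CAE2 h (F := fun x y z => \sum_(k' <- D g) f (muA (aA a) (act (aHi (aHi x)) b)) (muH (aHi y) k'.1) (muH z k'.2))); last by mlins.
by canc.
Qed.

Lemma mainS : smash_BicomodHomAlg muH D aH aHi muA aA aAi act lam.
Proof.
split.
- split; [exact: HA1 | exact: HA2 | exact: HA3 | exact: HA4 | split; [exact: HA5 | exact: HA6]].
- split; [exact: R1 | exact: R2 | exact: R3 | exact: R4 | exact: R5].
- split; [exact: L1 | exact: L2 | exact: L3 | exact: L4 | exact: L5].
- exact: B1.
Qed.

End Main.

Theorem proposition3p9 (K : fieldType) (H A : lmodType K)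
  (muH : H -> H -> H) (DeltaH : H -> seq (H * H)) (alphaH alphaHinv : H -> H)
  (muA : A -> A -> A) (alphaA alphaAinv : A -> A)
  (act : H -> A -> A) (lamA : A -> seq (H * A)) :
  HomBialgebra muH DeltaH alphaH ->
  ModHomAlg muH DeltaH alphaH muA alphaA act ->
  cancel alphaH alphaHinv -> cancel alphaHinv alphaH ->
  cancel alphaA alphaAinv -> cancel alphaAinv alphaA ->
  LComodHomAlg muH DeltaH alphaH muA alphaA lamA ->
  LLYD muH DeltaH alphaH alphaA act lamA ->
  smash_BicomodHomAlg muH DeltaH alphaH alphaHinv muA alphaA alphaAinv act lamA.
Proof.
move=> [[HaH HmuH aH_mul HassH] HD HCA HDm HDa] [[HaA HmuA aA_mul HassA] Hact aA_act M2 M3].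
move=> aHK aKH aAK aKA [_ [Hlam Hla HLCA] Hlm] [_ _ _ _ [_ HYD]].
Time (by eapply mainS; eassumption).
Qed.
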